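(* Given a homogeneous basis $\{x^p\}$ of $H^\ast$ with respect to $H^\ast=H_i^\ast\oplus H_v^\ast\oplus H_g^\ast$, there is an isomorphism of vector spaces \[ \mathrm{Br}\llbracket H^\ast\rrbracket\cong k\llbracket x^p\rrbracket/\mathcal I, \] where $\mathcal I$ is the ideal generated by $\{x_v^px_g^q\}$ (products of a basis element of $H_v^\ast$ with a basis element of $H_g^\ast$).
   Context: $G=\mathbb{Z}/2\mathbb{Z}=\{e,g\}$, $k$ a field of characteristic zero. $(H,\rho)$ is a finite dimensional self-invariant $\mathbb{Z}/2\mathbb{Z}$-graded $\mathbb{Z}/2\mathbb{Z}$-module ($g$ acts trivially on $H_g$), so $H=H_i\oplus H_v\oplus H_g$ where $H_e=H_i\oplus H_v$, $g$ acts trivially on $H_i$ and by $-1$ on $H_v$; $H^G=H_i\oplus H_g$. $B_n$ acts on $H^{\otimes n}$ through the braiding $v\otimes w\mapsto(h\cdot w)\otimes v$ for $v\in H_h$, and $\mathrm{Br}\llbracket H^\ast\rrbracket=\prod_n\mathrm{Br}^nH^\ast$ with $\mathrm{Br}^nH^\ast$ the $B_n$-invariant $n$-linear forms. The isomorphism uses the identification of symmetric $n$-linear forms with homogeneous polynomials of degree $n$ (subscripts on $x^p$ indicate the summand $i,v,g$). *)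

(* Defs.v *)
From HB Require Import structures.
From mathcomp Require Import all_boot all_order all_algebra.
Set Implicit Arguments. Unset Strict Implicit. Unset Printing Implicit Defensive.
Import GRing.Theory.
Local Open Scope ring_scope.

Definition Hsp (k : fieldType) (Hi Hv Hg : vectType k) : lmodType k :=
  ((Hi * Hv) * Hg)%type.

Section Braided.
Variables (k : fieldType) (Hi Hv Hg : vectType k).
Local Notation H := (Hsp Hi Hv Hg).

Definition epart (u : H) : H := ((u.1.1, u.1.2), 0).
Definition gpart (u : H) : H := ((0, 0), u.2).
Definition gact (u : H) : H := ((u.1.1, - u.1.2), u.2).

(* value of v at position m (0 if out of range) *)
Definition vat n (v : 'I_n -> H) (m : nat) : H :=
  if (insub m : option 'I_n) is Some j then v j else 0.

Definition upd n (v : 'I_n -> H) (i : 'I_n) (x : H) : 'I_n -> H :=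
  fun j => if j == i then x else v j.

Definition brsw n (i : nat) (v : 'I_n -> H) (x y : H) : 'I_n -> H :=
  fun j => if val j == i then x else if val j == i.+1 then y else v j.

Definition multilinear n (f : ('I_n -> H) -> k) : Prop :=
  forall (i : 'I_n) (v : 'I_n -> H) (a : k) (u w : H),
    f (upd v i (a *: u + w)) = a * f (upd v i u) + f (upd v i w).

(* invariance under the generator sigma_i of B_n, which acts on
   ... (x) v_i (x) v_{i+1} (x) ... through the braiding
   v (x) w |-> (h . w) (x) v  for v in H_h, i.e.
   v (x) w |-> w (x) v_e + (g . w) (x) v_g. *)
Definition braid_inv n (f : ('I_n -> H) -> k) : Prop :=
  forall i : nat, (i.+1 < n)%N -> forall v : 'I_n -> H,
    f v = f (brsw i v (vat v i.+1) (epart (vat v i)))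
          + f (brsw i v (gact (vat v i.+1)) (gpart (vat v i))).

Definition BrN n (f : ('I_n -> H) -> k) : Prop := multilinear f /\ braid_inv f.

End Braided.

(* variables x^p : indexed by I_a (basis of dual H_i), I_b (dual H_v), I_c (dual H_g) *)
Definition var (a b c : nat) : finType := (('I_a + 'I_b) + 'I_c)%type.
Definition xv {a b c : nat} (j : 'I_b) : var a b c := inl (inr j).
Definition xg {a b c : nat} (l : 'I_c) : var a b c := inr l.

(* formal power series k[[x^p]] : functions from monomials (exponent vectors) to k *)
Definition mon (V : finType) := {ffun V -> nat}.
Definition series (V : finType) (k : fieldType) := mon V -> k.

Definition mon2 (V : finType) (p q : V) : mon V := [ffun t => ((t == p) + (t == q))%N].

(* product of the monomial x^u with a power series s *)
Definition mulX (V : finType) (k : fieldType) (u : mon V) (s : series V k) : series V k :=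
  fun m => if [forall t, u t <= m t]%N then s [ffun t => (m t - u t)%N] else 0.

Definition in_ideal (k : fieldType) (a b c : nat) (s : series (var a b c) k) : Prop :=
  exists h : 'I_b -> 'I_c -> series (var a b c) k,
    forall m, s m = \sum_(j < b) \sum_(l < c) mulX (mon2 (xv j) (xg l)) (h j l) m.

(* Main.v *)
Require Import Defs.
From HB Require Import structures.
From mathcomp Require Import all_boot all_order all_algebra perm.
From mathcomp Require Import ring.
From Stdlib Require Import FunctionalExtensionality ClassicalEpsilon.
Set Implicit Arguments. Unset Strict Implicit. Unset Printing Implicit Defensive.
Import GRing.Theory.
Local Open Scope ring_scope.

Section Dual.
Variables (k : fieldType) (V : vectType k).

Definition cfun (i : 'I_(\dim {:V})) (u : V) : k^o := coord (vbasis {:V}) i u.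
Fact cfun_lin i : linear (cfun i). Proof. by move=> r x y; rewrite /cfun linearP. Qed.
HB.instance Definition _ i := GRing.isSemilinear.Build k V k^o _ (cfun i)
  (GRing.semilinear_linear (cfun_lin i)).

Variables (a : nat) (bb : a.-tuple 'Hom(V, k^o)) (bbB : basis_of fullv bb).

Lemma dual_sep (u : V) : (forall q, tnth bb q u = 0) -> u = 0.
Proof.
move=> H0.
have Hf (f : 'Hom(V, k^o)) : f u = 0.
  rewrite (coord_basis bbB (memvf f)) sum_lfunE big1 // => i _.
  by rewrite scale_lfunE -(tnth_nth 0 bb i) H0 scaler0.
rewrite (coord_vbasis (memvf u)) big1 // => i _.
have := Hf (linfun (cfun i)); rewrite lfunE /cfun => ->; by rewrite scale0r.
Qed.

Definition psi (u : V) : 'rV[k]_a := \row_q (tnth bb q u : k).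
Fact psi_lin : linear psi.
Proof. by move=> r x y; apply/rowP => q; rewrite !mxE linearP. Qed.
HB.instance Definition _ := GRing.isSemilinear.Build k V 'rV[k]_a _ psi
  (GRing.semilinear_linear psi_lin).

Lemma dual_basis : exists ub : 'I_a -> V,
  (forall q p, tnth bb q (ub p) = (q == p)%:R) /\
  (forall u, u = \sum_p tnth bb p u *: ub p).
Proof.
pose Psi : 'Hom(V, 'rV[k]_a) := linfun psi.
have inj : lker Psi == 0%VS.
  apply/lker0P => x y; rewrite !lfunE /= => exy.
  apply/eqP; rewrite -subr_eq0; apply/eqP/dual_sep => q.
  have := congr1 (fun M : 'rV_a => M 0 q) exy; rewrite /= !mxE => e.
  by rewrite linearB /= e subrr.
have dimV : \dim {:V} = a.
  have := size_basis bbB; rewrite !dimvf => <-.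
  by exact: (esym (muln1 _)).
have full : limg Psi = fullv.
  apply/eqP; rewrite eqEdim subvf /= limg_dim_eq; last first.
    by rewrite (eqP inj) capv0.
  rewrite dimV dimvf; change (1 * a <= a)%N; by rewrite mul1n.
have ex p : exists u : V, Psi u = delta_mx 0 p.
  have : (delta_mx 0 p : 'rV[k]_a) \in limg Psi by rewrite full memvf.
  by case/memv_imgP => u _ ->; exists u.
have [ub Hub] := fin_all_exists ex.
have dl q p : tnth bb q (ub p) = (q == p)%:R.
  have := congr1 (fun M : 'rV_a => M 0 q) (Hub p).
  by rewrite /= lfunE /= !mxE eq_sym => ->.
exists ub; split => // u.
apply/eqP; rewrite -subr_eq0; apply/eqP/dual_sep => q.
rewrite linearB linear_sum /=.
rewrite (bigD1 q) //= big1 => [|p /negbTE nq].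
  rewrite linearZ /= dl eqxx addr0 [X in _ - X](_ : _ = tnth bb q u) ?subrr //; exact: mulr1.
by rewrite linearZ /= dl eq_sym nq; exact: mulr0.
Qed.
End Dual.
Lemma cnt_gt0 (T : eqType) (x : T) s : (0 < count_mem x s)%N = (x \in s).
Proof. by rewrite -has_pred1 has_count. Qed.

Lemma count_perm (T : eqType) (s1 s2 : seq T) :
  (forall x, count_mem x s1 = count_mem x s2) -> perm_eq s1 s2.
Proof.
elim: s1 s2 => [|x s1 IH] s2 E.
  case: s2 E => // y s2 /(_ y) /=; by rewrite eqxx.
have xs2 : x \in s2 by rewrite -cnt_gt0 -E /= eqxx.
rewrite (permPr (perm_to_rem xs2)) perm_cons; apply: IH => y.
rewrite count_mem_rem -E /=.
by case: (x == y) => /=; rewrite ?add1n ?subn0 ?subn1.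
Qed.

Section Main.
Variables (k : fieldType) (Hi Hv Hg : vectType k) (a b c : nat)
  (bi : a.-tuple 'Hom(Hi, k^o)) (bv : b.-tuple 'Hom(Hv, k^o))
  (bg : c.-tuple 'Hom(Hg, k^o)).
Variables (Ui : 'I_a -> Hi) (Uv : 'I_b -> Hv) (Ug : 'I_c -> Hg).
Hypothesis di : forall q p, tnth bi q (Ui p) = (q == p)%:R.
Hypothesis dv : forall q p, tnth bv q (Uv p) = (q == p)%:R.
Hypothesis dg : forall q p, tnth bg q (Ug p) = (q == p)%:R.
Hypothesis ei : forall u, u = \sum_p tnth bi p u *: Ui p.
Hypothesis ev : forall u, u = \sum_p tnth bv p u *: Uv p.
Hypothesis eg : forall u, u = \sum_p tnth bg p u *: Ug p.

Local Notation H := (Hsp Hi Hv Hg).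
Local Notation V := (var a b c).

Definition X (p : V) (u : H) : k :=
  match p with
  | inl (inl i) => tnth bi i u.1.1
  | inl (inr j) => tnth bv j u.1.2
  | inr l => tnth bg l u.2
  end.

Definition Up (p : V) : H :=
  match p with
  | inl (inl i) => ((Ui i, 0), 0)
  | inl (inr j) => ((0, Uv j), 0)
  | inr l => ((0, 0), Ug l)
  end.

Lemma XU q p : X q (Up p) = (q == p)%:R.
Proof.
by case: q => [[i|j]|l]; case: p => [[i'|j']|l'] /=; rewrite ?linear0 ?di ?dv ?dg.
Qed.

Lemma XD p (r : k) (u w : H) : X p (r *: u + w) = r * X p u + X p w.
Proof. by case: p => [[i|j]|l] /=; rewrite linearP. Qed.

Lemma X0 p : X p 0 = 0.
Proof. by case: p => [[i|j]|l] /=; rewrite linear0. Qed.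

Lemma sum_fst (I : finType) (F : I -> H) : (\sum_i F i).1.1 = \sum_i (F i).1.1.
Proof. by elim/big_rec2: _ => // i x y _ <-. Qed.
Lemma sum_snd (I : finType) (F : I -> H) : (\sum_i F i).1.2 = \sum_i (F i).1.2.
Proof. by elim/big_rec2: _ => // i x y _ <-. Qed.
Lemma sum_thd (I : finType) (F : I -> H) : (\sum_i F i).2 = \sum_i (F i).2.
Proof. by elim/big_rec2: _ => // i x y _ <-. Qed.

Lemma expandH (u : H) : u = \sum_p X p u *: Up p.
Proof.
case: u => [[u1 u2] u3].
have E1 : (\sum_p X p ((u1, u2), u3) *: Up p).1.1 = u1.
  rewrite sum_fst !big_sumType /= [in RHS](ei u1).
  by rewrite [\sum_(i < b) _]big1 ?[\sum_(i < c) _]big1 ?addr0 // => i _; rewrite scaler0.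
have E2 : (\sum_p X p ((u1, u2), u3) *: Up p).1.2 = u2.
  rewrite sum_snd !big_sumType /= [in RHS](ev u2).
  by rewrite [\sum_(i < a) _]big1 ?[\sum_(i < c) _]big1 ?addr0 ?add0r // => i _; rewrite scaler0.
have E3 : (\sum_p X p ((u1, u2), u3) *: Up p).2 = u3.
  rewrite sum_thd !big_sumType /= [in RHS](eg u3).
  by rewrite [\sum_(i < a) _]big1 ?[\sum_(i < b) _]big1 ?addr0 ?add0r // => i _; rewrite scaler0.
by move: E1 E2 E3; case: (\sum_p _) => [[x1 x2] x3] /= -> -> ->.
Qed.

Section ML.
Variables (n : nat) (f : ('I_n -> H) -> k) (fML : multilinear f).

Lemma ml0 v i : f (upd v i 0) = 0.
Proof.
have := fML i v 1 0 0; rewrite scaler0 addr0 mul1r => e.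
by move: e; rewrite -{1}(addr0 (f _)) => /addrI <-.
Qed.

Lemma mlN v i u : f (upd v i (- u)) = - f (upd v i u).
Proof.
have := fML i v (-1) u 0; rewrite addr0 scaleN1r ml0 addr0 => ->.
by rewrite mulN1r.
Qed.

Lemma mlsum (I : finType) (cf : I -> k) (g : I -> H) v i :
  f (upd v i (\sum_p cf p *: g p)) = \sum_p cf p * f (upd v i (g p)).
Proof.
elim/big_rec2: _ => [|p x y _ <-]; first exact: ml0.
exact: fML.
Qed.

Lemma upd_id (v : 'I_n -> H) i : upd v i (v i) = v.
Proof. by apply: functional_extensionality => j; rewrite /upd; case: eqP => [->|]. Qed.

Lemma mlin_zero : (forall w : 'I_n -> V, f (fun j => Up (w j)) = 0) -> forall v, f v = 0.
Proof.
move=> Hb.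
suff: forall t v, (forall j : 'I_n, (t <= j)%N -> exists p, v j = Up p) -> f v = 0.
  by move=> S v; apply: (S n) => j; rewrite leqNgt ltn_ord.
elim=> [|t IH] v Hyp.
  have [w Hw] := fin_all_exists (fun j => Hyp j (leq0n _)).
  suff -> : v = (fun j => Up (w j)) by apply: Hb.
  exact: functional_extensionality.
case: (ltnP t n) => [ltn|gen]; last first.
  apply: IH => j tj; by move: (leq_trans gen tj); rewrite leqNgt ltn_ord.
pose i := Ordinal ltn.
rewrite -(upd_id v i) (expandH (v i)) mlsum big1 // => p _.
rewrite (IH _) ?mulr0 // => j tj; rewrite /upd.
case: eqP => [_|ne]; first by exists p.
apply: Hyp; rewrite ltn_neqAle tj andbT; apply/eqP => e; apply: ne.
by apply: val_inj.
Qed.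
End ML.

Definition monl (l : seq V) : mon V := [ffun p => count_mem p l].
Definition isv (p : V) := if p is inl (inr _) then true else false.
Definition isg (p : V) := if p is inr _ then true else false.
Definition mixed (m : mon V) : bool :=
  [exists jl : 'I_b * 'I_c, (0 < m (xv jl.1)) && (0 < m (xg jl.2))]%N.
Definition Sc (s : series V k) (l : seq V) : k :=
  if mixed (monl l) then 0 else s (monl l).
Definition Phi (s : series V k) (n : nat) (v : 'I_n -> H) : k :=
  \sum_(w : {ffun 'I_n -> V}) Sc s (codom w) * \prod_j X (w j) (v j).
Arguments Phi s n v : clear implicits.

Lemma mixed_mem l x y : isv x -> isg y -> x \in l -> y \in l -> mixed (monl l).
Proof.
case: x => [[i|j]|l0] //; case: y => [[i'|j']|l1] // _ _ xl yl.
by apply/existsP; exists (j, l1); rewrite /= !ffunE !cnt_gt0 xl yl.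
Qed.

Lemma mixed_memP l : mixed (monl l) ->
  exists j l0, xv j \in l /\ xg l0 \in l.
Proof.
by case/existsP => -[j l0] /andP[]; rewrite !ffunE !cnt_gt0 => ? ?; exists j, l0.
Qed.

Lemma monl_perm l1 l2 : perm_eq l1 l2 -> monl l1 = monl l2.
Proof. by move/seq.permP => E; apply/ffunP => p; rewrite !ffunE E. Qed.

Lemma Sc_perm s l1 l2 : perm_eq l1 l2 -> Sc s l1 = Sc s l2.
Proof. by move/monl_perm; rewrite /Sc => ->. Qed.

Lemma Phi_lin (r : k) (s t : series V k) n v :
  Phi (fun m => r * s m + t m) n v = r * Phi s n v + Phi t n v.
Proof.
rewrite /Phi mulr_sumr -big_split; apply: eq_bigr => w _ /=.
by rewrite /Sc; case: ifP => _; ring.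
Qed.

Lemma prod_upd n (F : 'I_n -> H -> k) v i x :
  \prod_j F j (upd v i x j) = F i x * \prod_(j | j != i) F j (v j).
Proof.
rewrite (bigD1 i) //= /upd eqxx; congr (_ * _); apply: eq_bigr => j /negbTE.
by move=> ->.
Qed.

Lemma Phi_ml s n : multilinear (Phi s n).
Proof.
move=> i v r u w; rewrite /Phi mulr_sumr -big_split; apply: eq_bigr => w' _ /=.
rewrite !(prod_upd (fun j => X (w' j))) XD; ring.
Qed.

Lemma Xe p u : X p (epart u) = if isg p then 0 else X p u.
Proof. by case: p => [[i|j]|l] /=; rewrite ?linear0. Qed.
Lemma Xg p u : X p (gpart u) = if isg p then X p u else 0.
Proof. by case: p => [[i|j]|l] /=; rewrite ?linear0. Qed.
Lemma Xa p u : X p (gact u) = if isv p then - X p u else X p u.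
Proof. by case: p => [[i|j]|l] /=; rewrite ?linearN. Qed.

Lemma vat_ord n (v : 'I_n -> H) (j : 'I_n) : vat v (val j) = v j.
Proof. by rewrite /vat valK. Qed.

Lemma prod2 n (F : 'I_n -> k) i0 i1 : i0 != i1 ->
  \prod_j F j = F i0 * F i1 * \prod_(j | (j != i0) && (j != i1)) F j.
Proof.
move=> ne; rewrite (bigD1 i0) // (bigD1 i1) 1?eq_sym //= mulrA.
by congr (_ * _); apply: eq_bigl => j; rewrite andbC.
Qed.

Lemma perm_codom_tperm n (w : {ffun 'I_n -> V}) (i0 i1 : 'I_n) :
  perm_eq (codom [ffun j => w (tperm i0 i1 j)]) (codom w).
Proof.
rewrite !codomE.
have -> : [seq [ffun j => w (tperm i0 i1 j)] i | i <- enum 'I_n] =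
          map w (map (tperm i0 i1) (enum 'I_n)).
  rewrite -[in RHS]map_comp !enumT; apply: eq_map => j; by rewrite /= ffunE.
apply: perm_map; apply: uniq_perm; rewrite ?enum_uniq //.
  by rewrite map_inj_uniq ?enum_uniq //; apply: perm_inj.
move=> j; rewrite mem_enum /=; apply/mapP; exists (tperm i0 i1 j); rewrite ?mem_enum //.
by rewrite tpermK.
Qed.

Lemma Phi_braid s n : braid_inv (Phi s n).
Proof.
move=> i hi v.
pose i0 : 'I_n := Ordinal (ltnW hi); pose i1 : 'I_n := Ordinal hi.
have ne : i0 != i1 by rewrite -val_eqE /= neq_ltn ltnSn.
have -> : i = val i0 by []. have -> : i.+1 = val i1 by [].
rewrite !vat_ord.
pose sw (w : {ffun 'I_n -> V}) := [ffun j => w (tperm i0 i1 j)].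
have swK : involutive sw by move=> w; apply/ffunP => j; rewrite !ffunE tpermK.
rewrite /Phi [in X in _ = X + _](reindex_inj (inv_inj swK)).
rewrite [in X in _ = _ + X](reindex_inj (inv_inj swK)) -big_split.
apply: eq_bigr => w _ /=.
rewrite !(Sc_perm s (perm_codom_tperm w i0 i1)).
have Hr x y : \prod_(j | (j != i0) && (j != i1)) X (sw w j) (brsw (val i0) v x y j)
   = \prod_(j | (j != i0) && (j != i1)) X (w j) (v j).
  apply: eq_bigr => j /andP[n0 n1]; rewrite /sw ffunE tpermD 1?eq_sym //.
  rewrite /brsw; move: n0 n1; rewrite -!val_eqE /= => /negbTE -> /negbTE -> //.
rewrite !(prod2 _ ne) !Hr.
have b0 x y : brsw (val i0) v x y i0 = x by rewrite /brsw eqxx.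
have b1 x y : brsw (val i0) v x y i1 = y by rewrite /brsw /= eqn_leq ltnn /= eqxx.
rewrite /sw !ffunE tpermL tpermR !b0 !b1 Xe Xg Xa.
set R := \prod_(j | _) _.
case Eg: (isg (w i0)); case Ev: (isv (w i1)); try ring.
have -> : Sc s (codom w) = 0.
  by rewrite /Sc (mixed_mem Ev Eg) ?codom_f.
ring.
Qed.

Lemma Phi_basis s n (w : {ffun 'I_n -> V}) :
  Phi s n (fun j => Up (w j)) = Sc s (codom w).
Proof.
rewrite /Phi (bigD1 w) //= [X in _ + X]big1 => [|w' nw].
  by rewrite addr0 big1 ?mulr1 // => j _; rewrite XU eqxx.
have [j nj] : exists j, w' j != w j.
  apply/existsP; move: nw; apply: contraR; rewrite negb_exists => /forallP E.
  by apply/eqP/ffunP => j; move: (E j); rewrite negbK => /eqP.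
by rewrite (bigD1 j) //= XU (negbTE nj) mul0r mulr0.
Qed.

Lemma codom_tuple (l : seq V) :
  codom [ffun j : 'I_(size l) => tnth (in_tuple l) j] = l.
Proof.
rewrite codomE -[RHS](map_tnth_enum (in_tuple l)).
by apply: eq_map => j; rewrite ffunE.
Qed.

Lemma monl_exists (m : mon V) : exists l, monl l = m.
Proof.
exists (flatten [seq nseq (m p) p | p <- enum V]).
apply/ffunP => q; rewrite ffunE count_flatten -map_comp.
rewrite (eq_map (fun p => count_nseq (pred1 q) (m p) p)) sumnE big_map big_enum /=.
rewrite (bigD1 q) //= eqxx mul1n big1 ?addn0 // => p /negbTE.
by rewrite eq_sym => ->.
Qed.

Lemma Phi_unmixed s : (forall m, ~~ mixed m -> s m = 0) -> forall n v, Phi s n v = 0.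
Proof.
move=> Z n v; rewrite /Phi big1 // => w _.
by rewrite /Sc; case: ifP => [_|/negbT /Z ->]; rewrite mul0r.
Qed.

Lemma Phi_ker s : (forall n v, Phi s n v = 0) -> forall m, ~~ mixed m -> s m = 0.
Proof.
move=> Z m nm; have [l El] := monl_exists m.
have := Z _ (fun j => Up ([ffun j : 'I_(size l) => tnth (in_tuple l) j] j)).
by rewrite Phi_basis codom_tuple /Sc El (negbTE nm).
Qed.

Definition chosen (m : mon V) :=
  [pick jl : 'I_b * 'I_c | (0 < m (xv jl.1)) && (0 < m (xg jl.2))]%N.

Lemma mon2_le j l (m : mon V) :
  [forall t, mon2 (xv j) (xg l) t <= m t]%N = (0 < m (xv j))%N && (0 < m (xg l))%N.
Proof.
apply/forallP/andP => [H|[h1 h2] t].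
  by move: (H (xv j)) (H (xg l)); rewrite !ffunE !eqxx /=.
rewrite ffunE; case: (eqVneq t (xv j)) => [->|n1] //=.
case: (eqVneq t (xg l)) => [->|n2] //=.
Qed.

Lemma ideal_iff (s : series V k) : in_ideal s <-> (forall m, ~~ mixed m -> s m = 0).
Proof.
split.
  case=> h E m nm; rewrite E big1 // => j _; rewrite big1 // => l _.
  rewrite /mulX mon2_le; case: ifP => // /andP[h1 h2].
  by move/existsP: nm; case; exists (j, l); rewrite h1 h2.
move=> Z.
pose h j l (m' : mon V) :=
  let mm := [ffun t => (m' t + mon2 (xv j) (xg l) t)%N] in
  if chosen mm == Some (j, l) then s mm else 0.
exists h => m.
have T j l : mulX (mon2 (xv j) (xg l)) (h j l) m =
             if chosen m == Some (j, l) then s m else 0.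
  rewrite /mulX /h; case: ifP => [le|nle].
    have -> : [ffun t => ([ffun t0 => m t0 - mon2 (xv j) (xg l) t0] t +
                mon2 (xv j) (xg l) t)%N] = m.
      apply/ffunP => t; rewrite !ffunE subnK //.
      by move/forallP: le => /(_ t); rewrite ffunE.
    by [].
  case: eqP => // ch; move: nle; rewrite mon2_le.
  rewrite /chosen in ch; case: pickP ch => // -[j' l'] + [e1 e2]; by rewrite e1 e2 => ->.
under eq_bigr => j _ do under eq_bigr => l _ do rewrite T.
rewrite pair_bigA /=.
case E: (chosen m) => [[j0 l0]|].
  rewrite (bigD1 (j0, l0)) //= eqxx big1 ?addr0 // => -[p1 p2] np /=.
  by case: eqP => // -[] e1 e2; move: np; rewrite e1 e2 eqxx.
rewrite big1 // Z //; apply/existsP => -[jl Pjl].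
by move: E; rewrite /chosen; case: pickP => // /(_ jl); rewrite Pjl.
Qed.

Lemma epartU x : epart (Up x) = if isg x then 0 else Up x.
Proof. by case: x => [[i|j]|l]. Qed.
Lemma gpartU x : gpart (Up x) = if isg x then Up x else 0.
Proof. by case: x => [[i|j]|l]. Qed.
Lemma gactU x : gact (Up x) = if isv x then - Up x else Up x.
Proof. case: x => [[i|j]|l] /=; rewrite /Defs.gact /= ?oppr0 //. by rewrite -[RHS]/((- 0, - Uv j), - 0) !oppr0. Qed.

Lemma nth_swap (d : V) pre x y post j :
  nth d (pre ++ y :: x :: post) j =
  if j == size pre then y else if j == (size pre).+1 then x
  else nth d (pre ++ x :: y :: post) j.
Proof.
rewrite !nth_cat; case: (ltngtP j (size pre)) => h.
- by rewrite (ltn_eqF (ltn_trans h (ltnSn _))).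
- case: eqP => [->|ne]; first by rewrite subSnn.
  have : (1 < j - size pre)%N.
    by rewrite ltn_subRL addn1 ltn_neqAle eq_sym h andbT; apply/eqP.
  by case: (j - size pre)%N => [|[|d']].
- by rewrite h subnn.
Qed.

Section Surj.
Local Unset Implicit Arguments.
Variable F : forall n, ('I_n -> H) -> k.
Hypothesis hF : forall n, BrN (F n).
Hypothesis two : (2%:R : k) != 0.

Definition T (l : seq V) : k := F (size l) (fun j => Up (tnth (in_tuple l) j)).

Lemma Fcast n1 n2 (e : n1 = n2) (v1 : 'I_n1 -> H) v2 :
  (forall j, v1 j = v2 (cast_ord e j)) -> F n1 v1 = F n2 v2.
Proof.
move: v2; case: n2 / e => v2 E; congr (F _ _).
by apply: functional_extensionality => j; rewrite E cast_ord_id.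
Qed.

Lemma T_codom n (w : {ffun 'I_n -> V}) : F n (fun j => Up (w j)) = T (codom w).
Proof.
have e : size (codom w) = n by rewrite size_codom card_ord.
symmetry; rewrite /T. apply: (Fcast _ _ e) => j; congr Up.
rewrite (tnth_nth (w (cast_ord e j))) /=.
have G (i : 'I_n) : nth (w i) (codom w) i = w i.
  by rewrite codomE (nth_map i) ?size_enum_ord ?ltn_ord // nth_ord_enum.
exact: (G (cast_ord e j)).
Qed.

Lemma Tswap_raw pre x y post :
  T (pre ++ x :: y :: post) =
  (if isg x && isv y then -1 else 1) * T (pre ++ y :: x :: post).
Proof.
set l := pre ++ x :: y :: post.
have hi : ((size pre).+1 < size l)%N by rewrite /l size_cat /= !addnS !ltnS leq_addr.
have hi0 : (size pre < size l)%N by apply: ltnW.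
pose i0 : 'I_(size l) := Ordinal hi0; pose i1 : 'I_(size l) := Ordinal hi.
pose v := fun j : 'I_(size l) => Up (tnth (in_tuple l) j).
have vi : vat v (size pre) = Up x.
  rewrite /vat (@insubT _ (fun m => m < size l)%N 'I_(size l) _ hi0) /v (tnth_nth x) /= /l nth_cat ltnn subnn //.
have vi1 : vat v (size pre).+1 = Up y.
  rewrite /vat (@insubT _ (fun m => m < size l)%N 'I_(size l) _ hi) /v (tnth_nth x) /= /l nth_cat ltnNge leqnSn /= subSnn //.
have [ML BI] := hF (size l).
transitivity (F (size l) v); first by []. have := BI _ hi v; rewrite vi vi1 => ->.
have G1 X Y : brsw (size pre) v X Y = upd (brsw (size pre) v 0 Y) i0 X.
  apply: functional_extensionality => j; rewrite /upd /brsw -val_eqE /=.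
  by case: eqP.
have G2 X Y : brsw (size pre) v X Y = upd (brsw (size pre) v X 0) i1 Y.
  apply: functional_extensionality => j; rewrite /upd /brsw -val_eqE /=.
  case: (eqVneq (val j) (size pre)) => [->|n1]; first by rewrite (ltn_eqF (ltnSn _)).
  by case: ifP.
have Esw : F (size l) (brsw (size pre) v (Up y) (Up x)) = T (pre ++ y :: x :: post).
  have e : size (pre ++ y :: x :: post) = size l by rewrite /l !size_cat.
  symmetry; rewrite /T; apply: (Fcast _ _ e) => j.
  rewrite /brsw /v /=.
  rewrite (tnth_nth x) (tnth_nth x) /= nth_swap.
  by case: ifP => //; case: ifP.
rewrite epartU gpartU gactU.
case: (isg x) => /=; case: (isv y) => /=.
- by rewrite [brsw _ _ (Up y) 0]G2 (ml0 ML) add0r [brsw _ _ (- Up y) _]G1 (mlN ML) -G1 Esw mulN1r.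
- by rewrite [brsw _ _ (Up y) 0]G2 (ml0 ML) add0r Esw mul1r.
- by rewrite [brsw _ _ _ 0]G2 (ml0 ML) addr0 Esw mul1r.
- by rewrite [brsw _ _ _ 0]G2 (ml0 ML) addr0 Esw mul1r.
Qed.

Lemma isv_isg y : isv y -> isg y = false.
Proof. by case: y => [[i|j]|l]. Qed.

Lemma two_zero (t : k) : t = -1 * t -> t = 0.
Proof.
move=> e; have : 2%:R * t = 0 by rewrite mulr_natl mulr2n {2}e mulN1r subrr.
by move/eqP; rewrite mulf_eq0 (negbTE two) /= => /eqP.
Qed.

Lemma Tmix_both pre x y post : isg x -> isv y ->
  T (pre ++ x :: y :: post) = 0 /\ T (pre ++ y :: x :: post) = 0.
Proof.
move=> gx vy.
have h1 := Tswap_raw pre x y post; rewrite gx vy /= in h1.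
have h2 := Tswap_raw pre y x post; rewrite (isv_isg _ vy) /= mul1r in h2.
have z : T (pre ++ x :: y :: post) = 0 by apply: two_zero; rewrite {1}h1 h2.
by split => //; rewrite h2.
Qed.

Lemma Tswap pre x y post : T (pre ++ x :: y :: post) = T (pre ++ y :: x :: post).
Proof.
case Ex: (isg x && isv y); last by rewrite Tswap_raw Ex mul1r.
by case/andP: Ex => gx vy; have [-> ->] := Tmix_both pre x y post gx vy.
Qed.

Lemma Tbubble pre s x t : T (pre ++ s ++ x :: t) = T (pre ++ x :: s ++ t).
Proof.
elim: s pre => [|z s IH] pre //=.
rewrite -[pre ++ z :: _]/(pre ++ [:: z] ++ _) catA IH -catA /=.
exact: Tswap.
Qed.

Lemma Tperm l1 l2 : perm_eq l1 l2 -> T l1 = T l2.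
Proof.
move=> P; suff S : forall pre, T (pre ++ l1) = T (pre ++ l2) by exact: (S [::]).
elim: l1 l2 P => [|x l1 IH] l2 P pre.
  by rewrite perm_sym in P; move/perm_nilP: P => ->.
have xl2 : x \in l2 by rewrite -(perm_mem P) mem_head.
case/splitPr: xl2 P => p1 p2 P.
have Q : perm_eq (p1 ++ x :: p2) (x :: p1 ++ p2).
  by rewrite (perm_catCA p1 [:: x] p2).
have P' : perm_eq l1 (p1 ++ p2).
  by rewrite -(perm_cons x); apply: (perm_trans P Q).
rewrite -[pre ++ x :: l1]/(pre ++ [:: x] ++ l1) catA (IH _ P') -catA /=.
by rewrite Tbubble.
Qed.

Lemma T_mixed l : mixed (monl l) -> T l = 0.
Proof.
case/mixed_memP => j [l0 [vj gl]].
have vj' : xv j \in rem (xg l0) l by apply: rem_mem.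
have P : perm_eq l (xg l0 :: xv j :: rem (xv j) (rem (xg l0) l)).
  apply: (perm_trans (perm_to_rem gl)); rewrite perm_cons; exact: perm_to_rem.
rewrite (Tperm _ _ P).
by have [] := Tmix_both [::] (xg l0) (xv j) (rem (xv j) (rem (xg l0) l)) (isT : isg (xg l0)) (isT : isv (xv j)).
Qed.

Definition sF (m : mon V) : k :=
  match excluded_middle_informative (exists l, monl l = m) with
  | left P => T (proj1_sig (constructive_indefinite_description _ P))
  | right _ => 0
  end.

Lemma sF_spec l : sF (monl l) = T l.
Proof.
rewrite /sF; case: excluded_middle_informative => [P|[]]; last by exists l.
case: constructive_indefinite_description => l' /= E.
apply: Tperm; apply: count_perm => p.
by move/ffunP: E => /(_ p); rewrite !ffunE.
Qed.

Lemma surj n v : Phi sF n v = F n v.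
Proof.
have [ML _] := hF n.
suff S : forall v, F n v - Phi sF n v = 0.
  by apply/eqP; rewrite eq_sym -subr_eq0; apply/eqP.
apply: (@mlin_zero n (fun v => F n v - Phi sF n v)).
  by move=> i v' r u w; rewrite ML Phi_ml; ring.
move=> w; pose w' := finfun w.
have -> : (fun j => Up (w j)) = (fun j => Up (w' j)).
  by apply: functional_extensionality => j; rewrite ffunE.
rewrite T_codom Phi_basis /Sc; case: ifP => [/T_mixed ->|_]; rewrite ?sF_spec subrr //.
Qed.
End Surj.
End Main.

Theorem proposition5p2 (k : fieldType) (chark0 : [pchar k] =i pred0)
  (Hi Hv Hg : vectType k) (a b c : nat)
  (bi : a.-tuple 'Hom(Hi, k^o)) (bv : b.-tuple 'Hom(Hv, k^o))
  (bg : c.-tuple 'Hom(Hg, k^o))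
  (bi_basis : basis_of fullv bi) (bv_basis : basis_of fullv bv)
  (bg_basis : basis_of fullv bg) :
  exists Phi : series (var a b c) k -> forall n : nat, ('I_n -> Hsp Hi Hv Hg) -> k,
    [/\ (* Phi is k-linear *)
        forall (r : k) (s t : series (var a b c) k) n v,
          Phi (fun m => r * s m + t m) n v = r * Phi s n v + Phi t n v,
        (* Phi lands in Br[[H^*]] = prod_n Br^n H^* *)
        forall s n, BrN (Phi s n),
        (* Phi is onto Br[[H^*]] *)
        forall F : forall n : nat, ('I_n -> Hsp Hi Hv Hg) -> k,
          (forall n, BrN (F n)) ->
          exists s, forall n v, Phi s n v = F n v
      & (* the kernel of Phi is the ideal I *)
        forall s, (forall n v, Phi s n v = 0) <-> in_ideal s].
Proof.
have [Ui [di ei]] := dual_basis bi_basis.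
have [Uv [dv ev]] := dual_basis bv_basis.
have [Ug [dg eg]] := dual_basis bg_basis.
have two : (2%:R : k) != 0 by rewrite ((pcharf0P k).1 chark0).
exists (fun s n v => @Phi k Hi Hv Hg a b c bi bv bg s n v); split.
- by move=> r s t n v; exact: Phi_lin.
- by move=> s n; split; [exact: Phi_ml | exact: Phi_braid].
- move=> F hF; exists (sF k Hi Hv Hg a b c Ui Uv Ug F) => n v.
  exact: (surj k Hi Hv Hg a b c bi bv bg Ui Uv Ug di dv dg ei ev eg F hF two n v).
- move=> s; rewrite ideal_iff; split.
    by move=> Z m nm; exact: (Phi_ker di dv dg Z nm).
  by move=> Z n v; exact: Phi_unmixed.
Qed.
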